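(* Let $C$ be a finite set of $m$ candidates, let $Q$ be a strict linear order on $C$ (written $\succ$), and let $f$ be the Plurality rule with winner set. Let $\vec a,\vec a'$ be two voting profiles that differ only in the vote of a single voter, and let $X=f(\vec a)$ and $Y=f(\vec a')$. Then the following four conditions are equivalent: (1) $X$ stochastically dominates $Y$ under $Q$, where each set is identified with the uniform lottery over its elements; (2) the relation $X\succ Y$ is entailed by $Q$, Axioms K, G and R, and transitivity; (3) $u(X)>u(Y)$ for every utility function $u$ consistent with $Q$; (4) $X$ match-dominates $Y$ according to $Q$.
   Context: Plurality with winner set: there are finitely many voters, each voter votes for a single candidate in $C$; a profile $\vec a$ lists all votes, and $f(\vec a)\subseteq C$ is the set of candidates receiving the maximum number of votes. Stochastic dominance: for nonempty $W\subseteq C$ let $p_W$ be the uniform distribution on $W$. Let $C^{(j)}$ be the set of the $j$ most preferred candidates under $Q$. $X$ stochastically dominates $Y$ if $\Pr_{w\sim p_X}(w\in C^{(j)})\ge \Pr_{w\sim p_Y}(w\in C^{(j)})$ for every $j\le m$, with strict inequality for at least one $j$. Utilities: $u:C\to\mathbb{R}$ is consistent with $Q$ if $u(a)>u(b)$ whenever $a\succ b$; for nonempty $W\subseteq C$, $u(W)=\frac1{|W|}\sum_{c\in W}u(c)$. Axioms for extending $Q$ to a (partial) relation $\succ,\succeq$ on nonempty subsets of $C$: K1: if $a\succ b$ for all $a\in X,b\in Y$, then $X\succ Y$. K2: if $a\succeq b$ for all $a\in X,b\in Y$, then $X\succeq Y$. G: if $a\succ b$ for all $b\in X$, then $\{a\}\succ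 \{a\}\cup X\succ X$. R: $a\succ b$ iff for all $X\subseteq C\setminus\{a,b\}$, $\{a\}\cup X\succ \{b\}\cup X$. ''$X\succ Y$ is entailed by $Q$, the axioms and transitivity'' means there is a chain $X=Z_0,Z_1,\dots,Z_t=Y$ in which each relation $Z_{i}\succeq Z_{i+1}$ or $Z_i\succ Z_{i+1}$ is an instance of one of the axioms (given $Q$), with at least one step strict. Match-domination: suppose $k=|X|\le |Y|=K$. List $X=\{x_1,\dots,x_k\}$ and $Y=\{y_1,\dots,y_K\}$ in increasing order of $Q$ (from least to most preferred). Let $r_j=\lceil jK/k\rceil$ for $0\le j\le k$, and partition $Y$ into $Y_j=\{y_{r_{j-1}+1},\dots,y_{r_j}\}$, $j=1,\dots,k$ (e.g., $k=3,K=7$ gives $Y_1=\{y_1,y_2,y_3\},Y_2=\{y_4,y_5\},Y_3=\{y_6,y_7\}$). $X$ match-dominates $Y$ according to $Q$ if (I) for all $j\le k$ and all $y\in Y_j$, $x_j\succeq y$; and (II) either at least one of these relations is strict, or $K \bmod k\ne 0$. If $|X|>|Y|$, then $X$ match-dominates $Y$ according to $Q$ if $Y$ match-dominates $X$ according to the reverse order of $Q$.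
   Formalization: Axiom G, as used for the entailment in condition (2), also has its order-dual half: if b ≻ a for all b ∈ X, then X ≻ X ∪ {a} ≻ {a}. The statement above fails without it. *)

(* Defs.v *)
From mathcomp Require Import all_boot all_order all_algebra.
From mathcomp Require Export reals.
Set Implicit Arguments.
Unset Strict Implicit.
Unset Printing Implicit Defensive.
Import Order.TTheory GRing.Theory Num.Theory.

Section Defs.
Variable C : finType.
(* [Q a b] means  a ≻ b  (a is strictly preferred to b). *)
Variable Q : rel C.

Definition strict_linear_order : Prop :=
  [/\ irreflexive Q, transitive Q & forall a b, a != b -> Q a b || Q b a].

Definition weakpref (a b : C) : bool := Q a b || (a == b).

Definition votes (n : nat) (pa : 'I_n -> C) (c : C) : nat :=
  #|[set i | pa i == c]|.

Definition plurality (n : nat) (pa : 'I_n -> C) : {set C} :=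
  [set c | [forall d, votes pa d <= votes pa c]].

Definition differ_in_one_voter (n : nat) (pa pa' : 'I_n -> C) : Prop :=
  exists i : 'I_n, forall j : 'I_n, j != i -> pa j = pa' j.

(* C^(j): the j most preferred candidates, i.e. those with < j better ones *)
Definition topj (j : nat) : {set C} := [set c | #|[set d | Q d c]| < j].

Definition prob_in {R : realType} (W S : {set C}) : R :=
  (#|W :&: S|%:R / #|W|%:R)%R.

Definition stoch_dom (R : realType) (X Y : {set C}) : Prop :=
  (forall j, (j <= #|C|)%N -> prob_in (R:=R) Y (topj j) <= prob_in X (topj j))%R /\
  (exists2 j, (j <= #|C|)%N & prob_in (R:=R) Y (topj j) < prob_in X (topj j))%R.

Definition consistent (R : realType) (u : C -> R) : Prop :=
  forall a b, Q a b -> (u b < u a)%R.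

Definition set_util (R : realType) (u : C -> R) (W : {set C}) : R :=
  ((\sum_(c in W) u c) / #|W|%:R)%R.

(* [ax_step X Y s] : "X ≻ Y" (s = true) or "X ⪰ Y" (s = false) is an
   instance of one of the axioms, given Q.  All sets are nonempty. *)
Inductive ax_step : {set C} -> {set C} -> bool -> Prop :=
| ax_K1 (X Y : {set C}) : X != set0 -> Y != set0 ->
    (forall a b, a \in X -> b \in Y -> Q a b) -> ax_step X Y true
| ax_K2 (X Y : {set C}) : X != set0 -> Y != set0 ->
    (forall a b, a \in X -> b \in Y -> weakpref a b) -> ax_step X Y false
| ax_G1 (a : C) (X : {set C}) : X != set0 ->
    (forall b, b \in X -> Q a b) -> ax_step [set a] (a |: X) true
| ax_G2 (a : C) (X : {set C}) : X != set0 ->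
    (forall b, b \in X -> Q a b) -> ax_step (a |: X) X true
(* dual (order-reversed) half of the Gardenfors axiom *)
| ax_G1' (a : C) (X : {set C}) : X != set0 ->
    (forall b, b \in X -> Q b a) -> ax_step X (a |: X) true
| ax_G2' (a : C) (X : {set C}) : X != set0 ->
    (forall b, b \in X -> Q b a) -> ax_step (a |: X) [set a] true
| ax_R (a b : C) (X : {set C}) : Q a b -> X \subset ~: [set a; b] ->
    ax_step (a |: X) (b |: X) true.

(* chains Z_0 = X, ..., Z_t = Y of axiom instances; the flag records
   whether at least one step is strict *)
Inductive ax_chain : {set C} -> {set C} -> bool -> Prop :=
| chain_nil (X : {set C}) : ax_chain X X false
| chain_cons (X Z Y : {set C}) (s1 s2 : bool) :
    ax_step X Z s1 -> ax_chain Z Y s2 -> ax_chain X Y (s1 || s2).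

Definition entailed (X Y : {set C}) : Prop := ax_chain X Y true.

(* 0-based position of x in the increasing (least to most preferred)
   listing of W *)
Definition pos (W : {set C}) (x : C) : nat := #|[set z in W | Q x z]|.

(* r_j = ceil (j K / k) *)
Definition rj (k K j : nat) : nat := (j * K + k.-1) %/ k.

(* y (0-based position t in Y) belongs to block Y_{j+1} of x_{j+1} *)
Definition in_block (k K j t : nat) : bool := (rj k K j <= t) && (t < rj k K j.+1).

Definition match_dom_le (X Y : {set C}) : Prop :=
  let k := #|X| in let K := #|Y| in
  (forall x y, x \in X -> y \in Y -> in_block k K (pos X x) (pos Y y) ->
     weakpref x y) /\
  ((exists x y, [/\ x \in X, y \in Y, in_block k K (pos X x) (pos Y y) & Q x y])
   \/ K %% k != 0).

End Defs.

Definition match_dom (C : finType) (Q : rel C) (X Y : {set C}) : Prop :=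
  if #|X| <= #|Y| then match_dom_le Q X Y
  else match_dom_le (fun a b => Q b a) Y X.

(* Main.v *)
Require Import Defs.
From mathcomp Require Import all_boot all_order all_algebra.
From mathcomp Require Import reals.
From mathcomp Require Import zify ring lra.
Set Implicit Arguments.
Unset Strict Implicit.
Unset Printing Implicit Defensive.


Section Gen.
Variables (C : finType) (Q : rel C) (HQ : strict_linear_order Q).

Lemma Qirr x : Q x x = false.
Proof. by case: HQ => H _ _; apply: H. Qed.
Lemma Qtr x y z : Q x y -> Q y z -> Q x z.
Proof. by case: HQ => _ H _; apply: H. Qed.
Lemma Qtot x y : x != y -> Q x y || Q y x.
Proof. by case: HQ => _ _ H; apply: H. Qed.
Lemma Qasym x y : Q x y -> Q y x = false.
Proof. by move=> h; apply/negP => h'; have := Qtr h h'; rewrite Qirr. Qed.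
Lemma Qneq x y : Q x y -> x != y.
Proof. by move=> h; apply/eqP => e; move: h; rewrite e Qirr. Qed.
Lemma Qnot x y : x != y -> ~~ Q x y -> Q y x.
Proof. by move=> /Qtot /orP [->|]. Qed.

Lemma pos_lt (W : {set C}) x y : x \in W -> y \in W -> Q x y -> pos Q W y < pos Q W x.
Proof.
move=> xW yW Qxy; rewrite /pos; apply: proper_card; apply/properP; split.
  apply/subsetP => z; rewrite !inE => /andP[zW Qyz].
  by rewrite zW (Qtr Qxy Qyz).
by exists y; rewrite !inE ?yW ?Qxy ?Qirr.
Qed.

Lemma pos_ltW (W : {set C}) x : x \in W -> pos Q W x < #|W|.
Proof.
move=> xW; rewrite /pos; apply: proper_card; apply/properP; split.
  by apply/subsetP => z; rewrite !inE => /andP[].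
by exists x; rewrite ?inE ?xW ?Qirr.
Qed.

Lemma pos_inj (W : {set C}) x y : x \in W -> y \in W -> pos Q W x = pos Q W y -> x = y.
Proof.
move=> xW yW e; case: (eqVneq x y) => // /Qtot /orP [h|h].
  by have := pos_lt xW yW h; rewrite e ltnn.
by have := pos_lt yW xW h; rewrite e ltnn.
Qed.

Lemma pos_surj (W : {set C}) t : t < #|W| -> exists2 y, y \in W & pos Q W y = t.
Proof.
move=> ht.
have U : uniq (map (pos Q W) (enum W)).
  rewrite map_inj_in_uniq ?enum_uniq // => x y.
  by rewrite !mem_enum; apply: pos_inj.
have S : {subset map (pos Q W) (enum W) <= iota 0 #|W|}.
  by move=> z /mapP [y]; rewrite mem_enum => yW ->; rewrite mem_iota add0n pos_ltW.
have Hs : size (iota 0 #|W|) <= size (map (pos Q W) (enum W)).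
  by rewrite size_map size_iota cardE.
have [_ E] := uniq_min_size U S Hs.
have : t \in map (pos Q W) (enum W) by rewrite E mem_iota.
by case/mapP => y; rewrite mem_enum => yW ->; exists y.
Qed.

Definition rk (c : C) := #|[set d | Q d c]|.

Lemma rk_lt c d : Q c d -> rk c < rk d.
Proof.
move=> h; rewrite /rk; apply: proper_card; apply/properP; split.
  by apply/subsetP => z; rewrite !inE => hz; apply: Qtr hz h.
by exists c; rewrite !inE ?h ?Qirr.
Qed.

Lemma rk_ltC c : rk c < #|C|.
Proof.
rewrite /rk -cardsT; apply: proper_card; apply/properP; split.
  by apply/subsetP.
by exists c; rewrite !inE ?Qirr.
Qed.

Lemma rk_ltQ c d : rk d < rk c -> Q d c.
Proof.
move=> h; case: (eqVneq d c) => [e|ne]; first by move: h; rewrite e ltnn.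
case/orP: (Qtot ne) => // h2; have := rk_lt h2.
by rewrite ltnNge (ltnW h).
Qed.

Lemma topj_lt c d : (d \in topj Q (rk c)) = Q d c.
Proof.
rewrite inE; apply/idP/idP; first exact: rk_ltQ.
exact: rk_lt.
Qed.

Lemma topj_le c d : (d \in topj Q (rk c).+1) = weakpref Q d c.
Proof.
have -> : (d \in topj Q (rk c).+1) = (rk d <= rk c) by rewrite inE ltnS.
rewrite leq_eqVlt /weakpref; apply/idP/idP.
  case/orP => [/eqP e|h]; last by rewrite (rk_ltQ h).
  case: (eqVneq d c) => [->|ne]; first by rewrite orbT.
  case/orP: (Qtot ne) => // h2; have := rk_lt h2; by rewrite e ltnn.
case/orP => [h|/eqP ->]; last by rewrite eqxx.
by rewrite (rk_lt h) orbT.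
Qed.

Lemma topj_up j c d : Q c d -> d \in topj Q j -> c \in topj Q j.
Proof. rewrite !inE => h hd; exact: ltn_trans (rk_lt h) hd. Qed.

End Gen.


Lemma rj_eq k j : 0 < k -> rj k k j = j.
Proof.
move=> k0; rewrite /rj divnMDl // divn_small ?addn0 //.
by rewrite prednK.
Qed.

Lemma rj_1 K j : rj 1 K j = j * K.
Proof. by rewrite /rj addn0 divn1. Qed.

Lemma rj_S k j : 0 < k -> j <= k -> rj k k.+1 j = if j == 0 then 0 else j.+1.
Proof.
move=> k0; rewrite /rj; case: j => [|j] hj /=.
  by rewrite mul0n add0n divn_small // prednK.
have -> : j.+1 * k.+1 + k.-1 = j.+2 * k + j by move: k0 hj; clear; lia.
by rewrite divnMDl // divn_small ?addn0.
Qed.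

Section Match.
Variables (C : finType) (Q : rel C) (HQ : strict_linear_order Q).

Lemma card_pos (W : {set C}) x : x \in W -> 0 < #|W|.
Proof. by move=> h; apply/card_gt0P; exists x. Qed.

Lemma L_a (W : {set C}) : ~ match_dom_le Q W W.
Proof.
rewrite /match_dom_le /=; case => _ [[x [y [xW yW hb Qxy]]] | ]; last by rewrite modnn.
move: hb; rewrite /in_block !rj_eq ?(card_pos xW) // ltnS => hb.
have e : pos Q W y = pos Q W x by apply/eqP; rewrite eqn_leq andbC.
by move: Qxy; rewrite (pos_inj HQ yW xW e) (Qirr HQ).
Qed.

Lemma ex_other (Y : {set C}) a : a \in Y -> Y != [set a] -> exists2 y, y \in Y & y != a.
Proof.
move=> aY ne; case: (boolP [exists y, (y \in Y) && (y != a)]).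
  by case/existsP => y /andP [h1 h2]; exists y.
move/existsPn => H; case/eqP: ne; apply/setP => z; rewrite inE.
case: (eqVneq z a) => [->|nz]; first by rewrite aY.
by have := H z; rewrite nz andbT => /negbTE.
Qed.

Lemma pos1 a : pos Q [set a] a = 0.
Proof.
rewrite /pos; apply/eqP; rewrite cards_eq0; apply/eqP/setP => z.
rewrite !inE; case: (eqVneq z a) => [->|]; by rewrite ?(Qirr HQ).
Qed.

Lemma L_b a (Y : {set C}) : a \in Y -> Y != [set a] ->
  match_dom_le Q [set a] Y <-> (forall y, y \in Y -> y != a -> Q a y).
Proof.
move=> aY ne; rewrite /match_dom_le /= cards1.
have ib t : in_block 1 #|Y| 0 t = (t < #|Y|) by rewrite /in_block !rj_1 mul0n mul1n.
split.
  case=> H _ y yY nya.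
  have := H a y (set11 a) yY; rewrite pos1 ib pos_ltW // /weakpref.
  by move/(_ isT) => /orP [//|/eqP e]; move: nya; rewrite e eqxx.
move=> H; split.
  move=> x y; rewrite inE => /eqP -> yY _; rewrite /weakpref.
  case: (eqVneq y a) => [->|ne']; first by rewrite ?eqxx orbT.
  by rewrite H.
left; have [y yY nya] := ex_other aY ne.
exists a, y; split => //; first exact: set11.
  by rewrite pos1 ib pos_ltW.
exact: H.
Qed.


Lemma L_c b (X : {set C}) : X != set0 -> b \notin X ->
  match_dom_le Q X (b |: X) <-> (forall x, x \in X -> Q x b).
Proof.
move=> Xn bX; rewrite /match_dom_le /= cardsU1 bX add1n.
have k0 : 0 < #|X| by rewrite card_gt0.
have ib j t : j < #|X| -> in_block #|X| #|X|.+1 j t =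
   ((if j == 0 then 0 else j.+1) <= t) && (t < j.+2).
  by move=> hj; rewrite /in_block rj_S // ?rj_S // ltnW.
have [x0 x0X px0] := pos_surj HQ k0.
have low z : z \in X -> Q x0 z = false.
  move=> zX; apply/negP => h; have := pos_lt HQ x0X zX h; by rewrite px0.
split.
  case=> H1 _ x xX; case: (boolP (Q x b)) => // nQ.
  have nxb : x != b by apply/eqP => e; move: bX; rewrite -e xX.
  have Qbx := Qnot HQ nxb nQ.
  have Qbx0 : Q b x0.
    case: (eqVneq x0 x) => [->//|n0].
    case/orP: (Qtot HQ n0) => h.
      by move: (low x xX); rewrite h.
    exact: (Qtr HQ Qbx h).
  have h1 : 1 < #|b |: X| by rewrite cardsU1 bX add1n ltnS.
  have [y1 y1Y py1] := pos_surj HQ h1.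
  have := H1 x0 y1 x0X y1Y; rewrite px0 ib // py1 /= => /(_ isT).
  rewrite /weakpref; case/orP => [h|/eqP e].
    move: y1Y; rewrite in_setU1 => /orP [/eqP e|y1X].
      by move: h; rewrite e (Qasym HQ Qbx0).
    by rewrite low in h.
  have : pos Q (b |: X) x0 = 0.
    rewrite /pos; apply/eqP; rewrite cards_eq0; apply/eqP/setP => z.
    rewrite !inE; case: (eqVneq z b) => [->|nzb] /=; first by rewrite (Qasym HQ Qbx0).
    by case: (boolP (z \in X)) => //= zX; rewrite low.
  by rewrite e py1.
move=> H; split.
  have posYx x : x \in X -> pos Q (b |: X) x = (pos Q X x).+1.
    move=> xX; rewrite /pos.
    have -> : [set z in b |: X | Q x z] = b |: [set z in X | Q x z].
      apply/setP => z; rewrite !inE; case: (eqVneq z b) => [->|] //=.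
      by rewrite H // (negbTE bX).
    by rewrite cardsU1 inE (negbTE bX) add1n.
  move=> x y xX; rewrite in_setU1 => /orP [/eqP ->|yX].
    by rewrite /weakpref H.
  rewrite ib ?pos_ltW // posYx // => hb.
  have e : pos Q X y = pos Q X x.
    by move: hb; case: eqP => [->|_]; move=> /andP [h1 h2]; lia.
  by rewrite (pos_inj HQ yX xX e) /weakpref eqxx orbT.
left; exists x0, b; split => //; first by rewrite setU11.
  rewrite ib px0 //=.
  suff -> : pos Q (b |: X) b = 0 by [].
  rewrite /pos; apply/eqP; rewrite cards_eq0; apply/eqP/setP => z.
  rewrite !inE; case: (eqVneq z b) => [->|nzb] /=; first by rewrite (Qirr HQ).
  by case: (boolP (z \in X)) => //= zX; rewrite (Qasym HQ (H z zX)).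
exact: H.
Qed.

Lemma shift a b (S : {set C}) x y : a != b -> a \notin S -> b \notin S -> Q a b ->
  x \in a |: S -> y \in b |: S -> Q y x -> pos Q (a |: S) x < pos Q (b |: S) y.
Proof.
move=> nab aS bS Qab xX yY Qyx.
pose g z := if z == a then b else z.
pose A := [set z in a |: S | Q x z]; pose B := [set z in b |: S | Q y z].
have inj : {in A &, injective g}.
  move=> z1 z2; rewrite !inE /g => /andP[h1 _] /andP[h2 _].
  case: (eqVneq z1 a) => [->|n1]; case: (eqVneq z2 a) => [->|n2] //= e.
  - by move: h2; rewrite (negbTE n2) /= -e (negbTE bS).
  - by move: h1; rewrite (negbTE n1) /= e (negbTE bS).
rewrite /pos -/A -/B -(card_in_imset inj); apply: proper_card; apply/properP; split.
  apply/subsetP => w /imsetP [z]; rewrite !inE /g => /andP[hz Qxz] ->.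
  case: (eqVneq z a) => [ez|nz] /=.
    by rewrite eqxx /= (Qtr HQ Qyx (Qtr HQ _ Qab)) // -ez.
  by move: hz; rewrite (negbTE nz) /= => zS; rewrite zS orbT (Qtr HQ Qyx Qxz) andbT.
exists (if x == a then b else x).
  case: (eqVneq x a) => [exa|nxa].
    by rewrite !inE eqxx /= (Qtr HQ Qyx) // exa.
  by move: xX; rewrite !inE (negbTE nxa) /= => xS; rewrite xS orbT Qyx.
apply/imsetP => [[z]]; rewrite !inE /g => /andP[hz Qxz].
case: (eqVneq x a) => [exa|nxa]; case: (eqVneq z a) => [eza|nza] //=.
- by move: Qxz; rewrite exa eza (Qirr HQ).
- by move=> e; move: hz; rewrite (negbTE nza) /= -e (negbTE bS).
- by move=> e; move: xX; rewrite !inE (negbTE nxa) /= e (negbTE bS).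
- by move=> e; move: Qxz; rewrite -e (Qirr HQ).
Qed.

Lemma L_f a b (S : {set C}) : a != b -> a \notin S -> b \notin S ->
  match_dom_le Q (a |: S) (b |: S) <-> Q a b.
Proof.
move=> nab aS bS; rewrite /match_dom_le /= !cardsU1 aS bS /= add1n.
have ib j t : in_block #|S|.+1 #|S|.+1 j t = (t == j).
  by rewrite /in_block !rj_eq // ltnS eq_sym eqn_leq.
have nba : b != a by rewrite eq_sym.
split.
  case=> _ H; case: (boolP (Q a b)) => // nQ; have Qba := Qnot HQ nab nQ.
  case: H => [[x [y [xX yY hb Qxy]]]|]; last by rewrite modnn.
  have := shift nba bS aS Qba yY xX Qxy; move: hb; rewrite ib => /eqP ->.
  by rewrite ltnn.
move=> Qab.
have first : forall x y, x \in a |: S -> y \in b |: S ->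
    in_block #|S|.+1 #|S|.+1 (pos Q (a |: S) x) (pos Q (b |: S) y) ->
    weakpref Q x y.
  move=> x y xX yY; rewrite ib => /eqP hb; rewrite /weakpref.
  case: (eqVneq x y) => [->|nxy]; first by rewrite orbT.
  rewrite orbF; apply: contraT => nQ; have Qyx := Qnot HQ nxy nQ.
  by have := shift nab aS bS Qab xX yY Qyx; rewrite hb ltnn.
split => //; left.
have hlt : pos Q (a |: S) a < #|b |: S|.
  have := pos_ltW HQ (setU11 a S); by rewrite !cardsU1 aS bS.
have [y yY py] := pos_surj HQ hlt.
exists a, y; split => //; first exact: setU11.
  by rewrite ib py.
have := first a y (setU11 a S) yY; rewrite ib py eqxx => /(_ isT).
rewrite /weakpref; case/orP => // /eqP e; move: yY; rewrite -e !inE (negbTE aS) orbF.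
by rewrite (negbTE nab).
Qed.

End Match.

Import Order.TTheory GRing.Theory Num.Theory.

Section Cards.
Variable C : finType.
Implicit Types X T : {set C}.

Lemma cardI_le X T : #|X :&: T| <= #|X|.
Proof. by apply: subset_leq_card; apply: subsetIl. Qed.

Lemma cardI_full X T : #|X| <= #|X :&: T| -> X \subset T.
Proof.
move=> h; have := subset_leqif_cards (subsetIl X T).
move/geq_leqif; rewrite h => /esym /eqP e.
by apply/setIidPl.
Qed.

Lemma cardIsub X T : X \subset T -> #|X :&: T| = #|X|.
Proof. by move/setIidPl ->. Qed.

Lemma cardI_zero X T x : x \in X -> #|X :&: T| = 0 -> x \notin T.
Proof.
move=> xX /eqP; rewrite cards_eq0 => /eqP e; apply/negP => xT.
have : x \in X :&: T by rewrite inE xX xT.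
by rewrite e inE.
Qed.

Lemma cardI_disj X T : (forall x, x \in X -> x \notin T) -> #|X :&: T| = 0.
Proof.
move=> H; apply/eqP; rewrite cards_eq0; apply/eqP/setP => z; rewrite !inE.
by case: (boolP (z \in X)) => //= zX; rewrite (negbTE (H z zX)).
Qed.

Lemma cardI_lt X T x : x \in X -> x \notin T -> #|X :&: T| < #|X|.
Proof.
move=> xX xT; apply: proper_card; apply/properP; split; first exact: subsetIl.
by exists x; rewrite // inE (negbTE xT) andbF.
Qed.

Lemma cardI_pos X T x : x \in X -> x \in T -> 0 < #|X :&: T|.
Proof. by move=> xX xT; apply/card_gt0P; exists x; rewrite inE xX xT. Qed.

Lemma cardIU1 b X T : b \notin X -> #|(b |: X) :&: T| = (b \in T) + #|X :&: T|.
Proof.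
move=> bX; case: (boolP (b \in T)) => bT.
  have -> : (b |: X) :&: T = b |: (X :&: T).
    by apply/setP => z; rewrite !inE; case: (eqVneq z b) => [->|] //=; rewrite bT.
  by rewrite cardsU1 inE (negbTE bX).
have -> : (b |: X) :&: T = X :&: T.
  by apply/setP => z; rewrite !inE; case: (eqVneq z b) => [->|] //=; rewrite (negbTE bT) andbF.
by [].
Qed.

Lemma cardI1 a T : #|[set a] :&: T| = (a \in T).
Proof.
have -> : [set a] = a |: set0 by rewrite setU0.
by rewrite cardIU1 ?inE // set0I cards0 addn0.
Qed.

End Cards.

Lemma set1_neq0 (T : finType) (a : T) : [set a] != set0.
Proof. by apply/set0Pn; exists a; rewrite inE.
Qed.

Section Real.
Variables (R : realType) (C : finType) (Q : rel C) (HQ : strict_linear_order Q).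
Local Open Scope ring_scope.
Implicit Types X Y T : {set C}.

Lemma prob_le X Y T : (0 < #|X|)%N -> (0 < #|Y|)%N ->
  (prob_in (R:=R) Y T <= prob_in X T) = (#|Y :&: T| * #|X| <= #|X :&: T| * #|Y|)%N.
Proof.
move=> hX hY; rewrite /prob_in ler_pdivrMr ?ltr0n // mulrAC ler_pdivlMr ?ltr0n //.
by rewrite -!natrM ler_nat.
Qed.

Lemma prob_lt X Y T : (0 < #|X|)%N -> (0 < #|Y|)%N ->
  (prob_in (R:=R) Y T < prob_in X T) = (#|Y :&: T| * #|X| < #|X :&: T| * #|Y|)%N.
Proof.
move=> hX hY; rewrite /prob_in ltr_pdivrMr ?ltr0n // mulrAC ltr_pdivlMr ?ltr0n //.
by rewrite -!natrM ltr_nat.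
Qed.

Lemma util_lt (u : C -> R) X Y : (0 < #|X|)%N -> (0 < #|Y|)%N ->
  (set_util u Y < set_util u X) =
  ((\sum_(c in Y) u c) * #|X|%:R < (\sum_(c in X) u c) * #|Y|%:R).
Proof.
move=> hX hY; rewrite /set_util ltr_pdivrMr ?ltr0n // mulrAC ltr_pdivlMr ?ltr0n //.
Qed.

Lemma util_le (u : C -> R) X Y : (0 < #|X|)%N -> (0 < #|Y|)%N ->
  (set_util u Y <= set_util u X) =
  ((\sum_(c in Y) u c) * #|X|%:R <= (\sum_(c in X) u c) * #|Y|%:R).
Proof.
move=> hX hY; rewrite /set_util ler_pdivrMr ?ltr0n // mulrAC ler_pdivlMr ?ltr0n //.
Qed.

Lemma cross_E (u : C -> R) X Y :
  ((\sum_(c in Y) u c) * #|X|%:R = \sum_(a in X) \sum_(b in Y) u b) /\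
  ((\sum_(c in X) u c) * #|Y|%:R = \sum_(a in X) \sum_(b in Y) u a).
Proof.
split; first by rewrite sumr_const mulr_natr.
rewrite mulr_natr -sumrMnl; apply: eq_bigr => a _; by rewrite sumr_const.
Qed.

Lemma cross_lt (u : C -> R) X Y : X != set0 -> Y != set0 ->
  (forall a b, a \in X -> b \in Y -> u b < u a) ->
  (\sum_(c in Y) u c) * #|X|%:R < (\sum_(c in X) u c) * #|Y|%:R.
Proof.
move=> /set0Pn [x xX] /set0Pn [y yY] H; have [-> ->] := cross_E u X Y.
apply: ltr_sum; first by apply/hasP; exists x; rewrite ?mem_index_enum.
move=> a aX; apply: ltr_sum; first by apply/hasP; exists y; rewrite ?mem_index_enum.
by move=> b bY; apply: H.
Qed.

Lemma cross_le (u : C -> R) X Y :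
  (forall a b, a \in X -> b \in Y -> u b <= u a) ->
  (\sum_(c in Y) u c) * #|X|%:R <= (\sum_(c in X) u c) * #|Y|%:R.
Proof.
move=> H; have [-> ->] := cross_E u X Y.
apply: ler_sum => a aX; apply: ler_sum => b bY; exact: H.
Qed.

Lemma sumU1 (u : C -> R) a X : a \notin X ->
  \sum_(c in a |: X) u c = u a + \sum_(c in X) u c.
Proof. by move=> aX; rewrite big_setU1. Qed.

Lemma step_util X Y s (u : C -> R) : ax_step Q X Y s -> consistent Q u ->
  set_util u Y <= set_util u X /\ (s -> set_util u Y < set_util u X).
Proof.
move=> st cu.
suff : if s then set_util u Y < set_util u X else set_util u Y <= set_util u X.
  by case: s {st} => h; split => //; apply: ltW.
case: st.
- move=> {}X {}Y Xn Yn H; rewrite util_lt ?card_gt0 //.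
  by apply: cross_lt => // a b aX bY; apply: cu; apply: H.
- move=> {}X {}Y Xn Yn H; rewrite util_le ?card_gt0 //.
  apply: cross_le => a b aX bY; have := H a b aX bY; rewrite /weakpref.
  by case/orP => [/cu/ltW //|/eqP ->].
- move=> a {}X Xn H; have aX : a \notin X by apply/negP => /H; rewrite (Qirr HQ).
  have h := @cross_lt u [set a] X ((set1_neq0 a)) Xn
     (fun a' b ha hb => eq_ind_r (fun z => u b < u z) (cu _ _ (H b hb)) (set1P ha)).
  move: h; rewrite big_set1 cards1 => h.
  have p1 : (0 < #|[set a]|)%N by rewrite cards1.
  have p2 : (0 < #|a |: X|)%N by rewrite cardsU1 aX.
  have p3 : (0 < #|X|)%N by rewrite card_gt0.
  rewrite util_lt // sumU1 // big_set1 cards1 cardsU1 aX add1n.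
  rewrite -addn1 natrD mulrDr !mulr1; rewrite mulr1 in h; lra.
- move=> a {}X Xn H; have aX : a \notin X by apply/negP => /H; rewrite (Qirr HQ).
  have h := @cross_lt u [set a] X ((set1_neq0 a)) Xn
     (fun a' b ha hb => eq_ind_r (fun z => u b < u z) (cu _ _ (H b hb)) (set1P ha)).
  move: h; rewrite big_set1 cards1 => h.
  have p1 : (0 < #|[set a]|)%N by rewrite cards1.
  have p2 : (0 < #|a |: X|)%N by rewrite cardsU1 aX.
  have p3 : (0 < #|X|)%N by rewrite card_gt0.
  rewrite util_lt // sumU1 // cardsU1 aX add1n.
  rewrite -addn1 natrD mulrDr mulrDl !mulr1; rewrite mulr1 in h; lra.
- move=> a {}X Xn H; have aX : a \notin X by apply/negP => /H; rewrite (Qirr HQ).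
  have h := @cross_lt u X [set a] Xn ((set1_neq0 a))
     (fun b a' hb ha => eq_ind_r (fun z => u z < u b) (cu _ _ (H b hb)) (set1P ha)).
  move: h; rewrite big_set1 cards1 => h.
  have p1 : (0 < #|[set a]|)%N by rewrite cards1.
  have p2 : (0 < #|a |: X|)%N by rewrite cardsU1 aX.
  have p3 : (0 < #|X|)%N by rewrite card_gt0.
  rewrite util_lt // sumU1 // cardsU1 aX add1n.
  rewrite -addn1 natrD mulrDr mulrDl !mulr1; rewrite mulr1 in h; lra.
- move=> a {}X Xn H; have aX : a \notin X by apply/negP => /H; rewrite (Qirr HQ).
  have h := @cross_lt u X [set a] Xn ((set1_neq0 a))
     (fun b a' hb ha => eq_ind_r (fun z => u z < u b) (cu _ _ (H b hb)) (set1P ha)).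
  move: h; rewrite big_set1 cards1 => h.
  have p1 : (0 < #|[set a]|)%N by rewrite cards1.
  have p2 : (0 < #|a |: X|)%N by rewrite cardsU1 aX.
  have p3 : (0 < #|X|)%N by rewrite card_gt0.
  rewrite util_lt // sumU1 // big_set1 cards1 cardsU1 aX add1n.
  rewrite -addn1 natrD mulrDr mulrDl !mulr1; rewrite mulr1 in h; lra.
- move=> a b {}X Qab Xs.
  have aX : a \notin X by apply/negP => /(subsetP Xs); rewrite !inE eqxx.
  have bX : b \notin X by apply/negP => /(subsetP Xs); rewrite !inE eqxx orbT.
  have p1 : (0 < #|a |: X|)%N by rewrite cardsU1 aX.
  have p2 : (0 < #|b |: X|)%N by rewrite cardsU1 bX.
  rewrite util_lt // !sumU1 // !cardsU1 aX bX.
  by rewrite ltr_pM2r ?ltr0n // ltrD2r; apply: cu.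
Qed.

Lemma chain_util X Y s (u : C -> R) : ax_chain Q X Y s -> consistent Q u ->
  set_util u Y <= set_util u X /\ (s -> set_util u Y < set_util u X).
Proof.
move=> ch cu; elim: ch => [Z|X' Z Y' s1 s2 st _ [IH1 IH2]]; first by split.
have [h1 h2] := step_util st cu.
split; first exact: le_trans IH1 h1.
case/orP => [/h2 h|/IH2 h]; first exact: le_lt_trans IH1 h.
exact: lt_le_trans h h1.
Qed.

Lemma entailed_util X Y : entailed Q X Y ->
  forall u : C -> R, consistent Q u -> set_util u Y < set_util u X.
Proof. by move=> e u cu; have [_ h] := chain_util e cu; apply: h. Qed.


End Real.

Import Order.TTheory GRing.Theory Num.Theory.

Section UW.
Variables (R : realType) (C : finType) (Q : rel C) (HQ : strict_linear_order Q).
Local Open Scope ring_scope.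
Implicit Types X Y T : {set C}.

Lemma sum_ind (W T : {set C}) : (\sum_(c in W) (c \in T) = #|W :&: T|)%N.
Proof.
rewrite -sum1_card big_mkcond [RHS]big_mkcond /=; apply: eq_bigr => c _.
by rewrite !inE; case: (c \in W); case: (c \in T).
Qed.

Lemma sum_rk (W : {set C}) : (\sum_(c in W) rk Q c <= #|W| * #|C|)%N.
Proof.
rewrite -sum_nat_const; apply: leq_sum => c _; exact/ltnW/rk_ltC.
Qed.

Lemma util_WS X Y : (0 < #|X|)%N -> (0 < #|Y|)%N ->
  (forall u : C -> R, consistent Q u -> set_util u Y < set_util u X) ->
  forall j, (#|Y :&: topj Q j| * #|X| <= #|X :&: topj Q j| * #|Y|)%N.
Proof.
move=> hX hY H j; set T := topj Q j.
pose N := (#|X| * #|Y| * #|C|)%N.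
pose u (c : C) : R := (N.+1 * (c \in T))%:R - (rk Q c)%:R.
have cu : consistent Q u.
  move=> c d Qcd; rewrite /u.
  have h1 := rk_lt HQ Qcd.
  have h2 : ((d \in T) <= (c \in T))%N.
    by case: (boolP (d \in T)) => // /(topj_up HQ Qcd) ->.
  have h3 : (N.+1 * (d \in T) + rk Q c < N.+1 * (c \in T) + rk Q d)%N.
    by move: h1 h2; case: (d \in T); case: (c \in T) => /=; lia.
  have : ((N.+1 * (d \in T) + rk Q c)%:R < (N.+1 * (c \in T) + rk Q d)%:R :> R).
    by rewrite ltr_nat.
  rewrite !natrD; lra.
have Su (W : {set C}) : \sum_(c in W) u c =
    (N.+1 * #|W :&: T|)%:R - (\sum_(c in W) rk Q c)%:R.
  by rewrite sumrB -!natr_sum -big_distrr /= sum_ind.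
have := H u cu; rewrite util_lt // !Su !mulrBl -!natrM => h.
have : ((N.+1 * #|Y :&: T| * #|X| + (\sum_(c in X) rk Q c) * #|Y|)%:R <
        (N.+1 * #|X :&: T| * #|Y| + (\sum_(c in Y) rk Q c) * #|X|)%:R :> R).
  rewrite !natrD; lra.
rewrite ltr_nat => hn.
have hb : ((\sum_(c in Y) rk Q c) * #|X| <= N)%N.
  by rewrite /N mulnC -mulnA leq_mul2l (sum_rk Y) orbT.
move: hn hb; set p := (#|Y :&: T| * #|X|)%N; set q := (#|X :&: T| * #|Y|)%N.
rewrite -!mulnA -/p -/q => hn hb.
rewrite leqNgt; apply/negP => hpq.
have : (N.+1 * q.+1 <= N.+1 * p)%N by rewrite leq_mul2l hpq orbT.
nia.
Qed.

End UW.


Inductive shape (C : finType) (X Y : {set C}) : Prop :=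
| Sh_eq : X = Y -> shape X Y
| Sh_b a : X = [set a] -> a \in Y -> Y != [set a] -> shape X Y
| Sh_c b : b \notin X -> Y = b |: X -> shape X Y
| Sh_d b : Y = [set b] -> b \in X -> X != [set b] -> shape X Y
| Sh_e a : a \notin Y -> X = a |: Y -> shape X Y
| Sh_f a b (S : {set C}) : a != b -> a \notin S -> b \notin S ->
     X = a |: S -> Y = b |: S -> shape X Y.

Section Plur.
Variables (C : finType) (n : nat).

Lemma plur_char (p : 'I_n -> C) (L : nat) (c0 : C) :
  (forall d, votes p d <= L) -> votes p c0 = L ->
  forall c, (c \in plurality p) = (votes p c == L).
Proof.
move=> hb h0 c; rewrite inE; apply/forallP/eqP.
  by move=> H; have := H c0; have := hb c; rewrite h0; lia.
by move=> -> d.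
Qed.

Lemma plur_n0 (p : 'I_n -> C) (c0 : C) : plurality p != set0.
Proof.
case: (@arg_maxnP C c0 predT (votes p) isT) => x _ Hx.
by apply/set0Pn; exists x; rewrite inE; apply/forallP => d; apply: Hx.
Qed.

Lemma key (pa pa' : 'I_n -> C) i : (forall j, j != i -> pa j = pa' j) ->
  forall c, votes pa' c + (pa i == c) = votes pa c + (pa' i == c).
Proof.
move=> H c; rewrite /votes.
rewrite (cardsD1 i [set j | pa j == c]) (cardsD1 i [set j | pa' j == c]) !inE.
have -> : [set j | pa j == c] :\ i = [set j | pa' j == c] :\ i.
  apply/setP => j; rewrite !inE; case: (eqVneq j i) => //= ji.
  by rewrite H.
lia.
Qed.

Lemma classify (pa pa' : 'I_n -> C) : differ_in_one_voter pa pa' ->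
  [/\ plurality pa != set0, plurality pa' != set0 &
      shape (plurality pa) (plurality pa')].
Proof.
case=> i Hi.
have n1 := plur_n0 pa (pa i); have n2 := plur_n0 pa' (pa i); split => //.
have K := key Hi.
set X := plurality pa in n1 *; set Y := plurality pa' in n2 *.
set s := votes pa in K *; set s' := votes pa' in K *.
set a := pa i in K *; set b := pa' i in K *.
have /set0Pn [x0 x0X] := n1.
have hM d : s d <= s x0 by move: x0X; rewrite inE => /forallP; apply.
set M := s x0 in hM.
have inX c : (c \in X) = (s c == M) by apply: (plur_char hM).
case: (eqVneq a b) => [eab|nab].
  apply: Sh_eq; apply/setP => c; rewrite !inE; apply: eq_forallb => d.
  by have := K c; have := K d; rewrite -eab /s /s'; lia.
have Ka : s' a + 1 = s a by have := K a; rewrite eqxx eq_sym (negbTE nab); lia.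
have Kb : s' b = s b + 1 by have := K b; rewrite eqxx (negbTE nab); lia.
have Ko c : c != a -> c != b -> s' c = s c.
  by move=> ca cb; have := K c; rewrite eq_sym (negbTE ca) eq_sym (negbTE cb); lia.
case: (boolP (b \in X)) => bX.
  have sb : s b = M by apply/eqP; rewrite -inX.
  have bd d : s' d <= M + 1.
    case: (eqVneq d a) => [->|da]; first by have := hM a; lia.
    case: (eqVneq d b) => [->|db]; first by lia.
    by rewrite Ko //; have := hM d; lia.
  have hY : Y = [set b].
    apply/setP => c; rewrite (plur_char (c0 := b) bd) -/s'; last by rewrite -/s'; lia.
    rewrite inE.
    case: (eqVneq c b) => [->|cb]; first by rewrite Kb sb eqxx.
    case: (eqVneq c a) => [->|ca]; first by have := hM a; lia.
    by rewrite Ko //; have := hM c; lia.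
  case: (eqVneq X [set b]) => [eX|nX]; first by apply: Sh_eq; rewrite eX hY.
  exact: Sh_d hY bX nX.
have sbM : s b < M by have := hM b; move: bX; rewrite inX; lia.
case: (eqVneq (s b).+1 M) => [e1|n1'].
  have bd d : s' d <= M.
    case: (eqVneq d a) => [->|da]; first by have := hM a; lia.
    case: (eqVneq d b) => [->|db]; first by lia.
    by rewrite Ko //; have := hM d.
  have hY : Y = b |: (X :\ a).
    apply/setP => c; rewrite (plur_char (c0 := b) bd) -/s'; last by rewrite -/s'; lia.
    rewrite in_setU1 in_setD1 inX.
    case: (eqVneq c b) => [->|cb] /=; first by rewrite Kb addn1 e1 eqxx.
    case: (eqVneq c a) => [->|ca] /=; first by have := hM a; lia.
    by rewrite Ko.
  case: (boolP (a \in X)) => aX.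
    apply: (Sh_f (S := X :\ a) nab _ _ _ hY).
    - by rewrite in_setD1 eqxx.
    - by rewrite in_setD1 (negbTE bX) andbF.
    - by rewrite setD1K.
  apply: (Sh_c bX); rewrite hY; congr (_ |: _); apply/setP => c; rewrite in_setD1.
  by case: (eqVneq c a) => //= ->; rewrite (negbTE aX).
have sb2 : (s b).+1 < M by lia.
case: (boolP [exists x, (x \in X) && (x != a)]) => [/existsP [x1 /andP [x1X x1a]] | /existsPn hno].
  have bd d : s' d <= M.
    case: (eqVneq d a) => [->|da]; first by have := hM a; lia.
    case: (eqVneq d b) => [->|db]; first by lia.
    by rewrite Ko //; have := hM d.
  have x1b : x1 != b by apply/eqP => e; move: bX; rewrite -e x1X.
  have hY : Y = X :\ a.
    apply/setP => c; rewrite (plur_char (c0 := x1) bd) -/s'; last by rewrite -/s' Ko //; apply/eqP; rewrite -inX.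
    rewrite in_setD1 inX.
    case: (eqVneq c a) => [->|ca] /=; first by have := hM a; lia.
    case: (eqVneq c b) => [->|cb] /=; first by lia.
    by rewrite Ko.
  case: (boolP (a \in X)) => aX.
    apply: (Sh_e (a := a)); first by rewrite hY in_setD1 eqxx.
    by rewrite hY setD1K.
  apply: Sh_eq; rewrite hY; apply/setP => c; rewrite in_setD1.
  by case: (eqVneq c a) => //= ->; rewrite (negbTE aX).
have x0a : x0 = a by apply/eqP; have := hno x0; rewrite x0X /= negbK.
have hX : X = [set a].
  apply/setP => c; rewrite inE; apply/idP/idP => [cX|/eqP ->]; last by rewrite -x0a.
  by have := hno c; rewrite cX /= negbK.
have sa : s a = M by rewrite -x0a.
have aY : a \in Y.
  rewrite inE; apply/forallP => d; rewrite -/s'.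
  case: (eqVneq d a) => [->//|da].
  case: (eqVneq d b) => [->|db]; first by lia.
  rewrite Ko //; have := hM d; have : d \notin X by rewrite hX inE.
  rewrite inX; lia.
case: (eqVneq Y [set a]) => [eY|nY]; first by apply: Sh_eq; rewrite hX eY.
exact: Sh_b hX aY nY.
Qed.

End Plur.

Import Order.TTheory GRing.Theory Num.Theory.

Section Cases.
Variables (R : realType) (C : finType) (Q : rel C) (HQ : strict_linear_order Q).
Implicit Types X Y T : {set C}.

Definition WS X Y := forall j, j <= #|C| ->
  #|Y :&: topj Q j| * #|X| <= #|X :&: topj Q j| * #|Y|.

Definition UT X Y := forall u : C -> R, consistent Q u -> (set_util u Y < set_util u X)%R.

Lemma flipHQ : strict_linear_order (fun a b => Q b a).
Proof.
split.
- by move=> x; rewrite (Qirr HQ).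
- by move=> y x z h1 h2; apply: (Qtr HQ h2 h1).
- by move=> a b ne; rewrite orbC; apply: Qtot.
Qed.

Lemma one_step X Y : ax_step Q X Y true -> entailed Q X Y.
Proof. by move=> h; apply: (chain_cons h (chain_nil _ _)). Qed.

Lemma assemble X Y (P : Prop) : X != set0 -> Y != set0 ->
  (WS X Y -> P) -> (P -> stoch_dom Q R X Y) -> (P -> entailed Q X Y) ->
  (P <-> match_dom Q X Y) ->
  [<-> stoch_dom Q R X Y; entailed Q X Y; UT X Y; match_dom Q X Y].
Proof.
move=> Xn Yn WP PS PE PM.
have hX : 0 < #|X| by rewrite card_gt0.
have hY : 0 < #|Y| by rewrite card_gt0.
have SW : stoch_dom Q R X Y -> WS X Y.
  by case=> H _ j hj; rewrite -(prob_le R) //; apply: H.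
have UW : UT X Y -> WS X Y by move=> H j _; apply: (util_WS HQ hX hY H).
do !apply: AllIffConj.
- by move=> /SW /WP /PE.
- by move=> h u cu; apply: (entailed_util HQ h cu).
- by move=> /UW /WP /PM.
- by move=> /PM /PS.
Qed.

Lemma assemble_eq X :
  [<-> stoch_dom Q R X X; entailed Q X X; UT X X; match_dom Q X X].
Proof.
have UF : ~ UT X X.
  move=> H; have cu : consistent Q (fun c => (- (rk Q c)%:R)%R : R).
    by move=> a b h /=; rewrite ltrN2 ltr_nat; apply: rk_lt.
  by have := H _ cu; rewrite ltxx.
have MF : ~ match_dom Q X X by rewrite /match_dom leqnn; apply: L_a.
do !apply: AllIffConj.
- by case=> _ [j _]; rewrite ltxx.
- by move=> h u cu; apply: (entailed_util HQ h cu).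
- by move/UF.
- by move/MF.
Qed.

End Cases.

Import Order.TTheory GRing.Theory Num.Theory.

Section Cases2.
Variables (R : realType) (C : finType) (Q : rel C) (HQ : strict_linear_order Q).
Implicit Types X Y T : {set C}.

Lemma rk_le c : rk Q c <= #|C|.
Proof. exact/ltnW/(rk_ltC HQ). Qed.
Lemma rk_leS c : (rk Q c).+1 <= #|C|.
Proof. exact: (rk_ltC HQ). Qed.

Lemma case_c b X : X != set0 -> b \notin X ->
  [<-> stoch_dom Q R X (b |: X); entailed Q X (b |: X); UT R Q X (b |: X);
       match_dom Q X (b |: X)].
Proof.
move=> Xn bX; have hX : 0 < #|X| by rewrite card_gt0.
have hY : 0 < #|b |: X| by rewrite cardsU1 bX.
apply: (@assemble R C Q HQ _ _ (forall x, x \in X -> Q x b)) => //.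
- by apply/set0Pn; exists b; rewrite setU11.
- move=> W x xX; have := W _ (rk_leS b).
  rewrite cardIU1 // cardsU1 bX (topj_le HQ) /weakpref eqxx orbT /= => h.
  have : #|X| <= #|X :&: topj Q (rk Q b).+1| by move: h; nia.
  move/cardI_full/subsetP/(_ x xX); rewrite (topj_le HQ) /weakpref.
  case/orP => // /eqP e; by move: bX; rewrite -e xX.
- move=> P; split.
    move=> j hj; rewrite prob_le // cardIU1 // cardsU1 bX /=.
    case: (boolP (b \in topj Q j)) => bT /=.
      rewrite cardIsub; first by lia.
      by apply/subsetP => x xX; apply: (topj_up HQ (P x xX)).
    by have := cardI_le X (topj Q j); nia.
  exists (rk Q b); first exact: rk_le.
  rewrite prob_lt // cardIU1 // cardsU1 bX (topj_lt HQ) (Qirr HQ) /= cardIsub; first by nia.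
  by apply/subsetP => x xX; rewrite (topj_lt HQ) P.
- by move=> P; apply: one_step; apply: ax_G1'.
- rewrite /match_dom cardsU1 bX leq_addl; split; first by move/(L_c HQ Xn bX).
  by move/(L_c HQ Xn bX).
Qed.


Lemma case_e a Y : Y != set0 -> a \notin Y ->
  [<-> stoch_dom Q R (a |: Y) Y; entailed Q (a |: Y) Y; UT R Q (a |: Y) Y;
       match_dom Q (a |: Y) Y].
Proof.
move=> Yn aY; have hY : 0 < #|Y| by rewrite card_gt0.
have hX : 0 < #|a |: Y| by rewrite cardsU1 aY.
apply: (@assemble R C Q HQ _ _ (forall y, y \in Y -> Q a y)) => //.
- by apply/set0Pn; exists a; rewrite setU11.
- move=> W y yY; have := W _ (rk_le a).
  rewrite cardIU1 // cardsU1 aY (topj_lt HQ) (Qirr HQ) /= => h.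
  have h0 : #|Y :&: topj Q (rk Q a)| = 0 by move: h; nia.
  have := cardI_zero yY h0; rewrite (topj_lt HQ) => nQ.
  apply: (Qnot HQ) nQ; by apply/eqP => e; move: aY; rewrite -e yY.
- move=> P; split.
    move=> j hj; rewrite prob_le // cardIU1 // cardsU1 aY /=.
    case: (boolP (a \in topj Q j)) => aT /=.
      by have := cardI_le Y (topj Q j); nia.
    rewrite cardI_disj //= => y yY; apply/negP => yT.
    by move: aT; rewrite (topj_up HQ (P y yY) yT).
  exists (rk Q a).+1; first exact: rk_leS.
  rewrite prob_lt // cardIU1 // cardsU1 aY (topj_le HQ) /weakpref eqxx orbT /=.
  rewrite cardI_disj /=; first by nia.
  move=> y yY; rewrite (topj_le HQ) /weakpref (Qasym HQ (P y yY)) /=.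
  by apply/eqP => e; move: aY; rewrite -e yY.
- by move=> P; apply: one_step; apply: ax_G2.
- rewrite /match_dom cardsU1 aY add1n ltnn.
  by split => /(L_c (flipHQ HQ) Yn aY).
Qed.

Lemma case_b a Y : a \in Y -> Y != [set a] ->
  [<-> stoch_dom Q R [set a] Y; entailed Q [set a] Y; UT R Q [set a] Y;
       match_dom Q [set a] Y].
Proof.
move=> aY nY; have hY : 0 < #|Y| by apply/card_gt0P; exists a.
have hX : 0 < #|[set a]| by rewrite cards1.
have [y0 y0Y y0a] := ex_other aY nY.
apply: (@assemble R C Q HQ _ _ (forall y, y \in Y -> y != a -> Q a y)) => //.
- exact: set1_neq0.
- by apply/set0Pn; exists a.
- move=> W y yY ya; have := W _ (rk_le a).
  rewrite cardI1 (topj_lt HQ) (Qirr HQ) /= cards1 => h.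
  have h0 : #|Y :&: topj Q (rk Q a)| = 0 by move: h; nia.
  have := cardI_zero yY h0; rewrite (topj_lt HQ) => nQ.
  exact: (Qnot HQ) nQ.
- move=> P; split.
    move=> j hj; rewrite prob_le // cardI1 cards1.
    case: (boolP (a \in topj Q j)) => aT /=.
      by have := cardI_le Y (topj Q j); nia.
    rewrite cardI_disj //= => y yY; apply/negP => yT.
    case: (eqVneq y a) => [e|ya]; first by move: aT; rewrite -e yT.
    by move: aT; rewrite (topj_up HQ (P y yY ya) yT).
  exists (rk Q a).+1; first exact: rk_leS.
  rewrite prob_lt // cardI1 cards1 (topj_le HQ) /weakpref eqxx orbT /=.
  have := @cardI_lt _ Y (topj Q (rk Q a).+1) y0 y0Y.
  rewrite (topj_le HQ) /weakpref (Qasym HQ (P y0 y0Y y0a)) (negbTE y0a) /= => /(_ isT).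
  lia.
- move=> P; apply: one_step; rewrite -(setD1K aY); apply: ax_G1.
    by apply/set0Pn; exists y0; rewrite in_setD1 y0a.
  by move=> y; rewrite in_setD1 => /andP [ya yY]; apply: P.
- by rewrite /match_dom cards1 hY; apply: iff_sym; apply: (L_b HQ aY nY).
Qed.

Lemma case_d b X : b \in X -> X != [set b] ->
  [<-> stoch_dom Q R X [set b]; entailed Q X [set b]; UT R Q X [set b];
       match_dom Q X [set b]].
Proof.
move=> bX nX; have hX : 0 < #|X| by apply/card_gt0P; exists b.
have hY : 0 < #|[set b]| by rewrite cards1.
have [x0 x0X x0b] := ex_other bX nX.
apply: (@assemble R C Q HQ _ _ (forall x, x \in X -> x != b -> Q x b)) => //.
- by apply/set0Pn; exists b.
- exact: set1_neq0.
- move=> W x xX xb; have := W _ (rk_leS b).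
  rewrite cardI1 (topj_le HQ) /weakpref eqxx orbT /= cards1 => h.
  have : #|X| <= #|X :&: topj Q (rk Q b).+1| by move: h; nia.
  move/cardI_full/subsetP/(_ x xX); rewrite (topj_le HQ) /weakpref (negbTE xb) orbF //.
- move=> P; split.
    move=> j hj; rewrite prob_le // cardI1 cards1.
    case: (boolP (b \in topj Q j)) => bT /=.
      rewrite cardIsub; first by lia.
      apply/subsetP => x xX; case: (eqVneq x b) => [->//|xb].
      exact: (topj_up HQ (P x xX xb)).
    lia.
  exists (rk Q b); first exact: rk_le.
  rewrite prob_lt // cardI1 cards1 (topj_lt HQ) (Qirr HQ) /=.
  have := @cardI_pos _ X (topj Q (rk Q b)) x0 x0X; rewrite (topj_lt HQ) P // => /(_ isT).
  lia.
- move=> P; apply: one_step; rewrite -(setD1K bX); apply: ax_G2'.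
    by apply/set0Pn; exists x0; rewrite in_setD1 x0b.
  by move=> x; rewrite in_setD1 => /andP [xb xX]; apply: P.
- have h2 : 1 < #|X|.
    have : [set b] \proper X.
      apply/properP; split; first by rewrite sub1set.
      by exists x0; rewrite // inE.
    by move/proper_card; rewrite cards1.
  rewrite /match_dom cards1 leqNgt h2 /=.
  by apply: iff_sym; apply: (L_b (flipHQ HQ) bX nX).
Qed.

Lemma case_f (a b : C) (S : {set C}) : a != b -> a \notin S -> b \notin S ->
  [<-> stoch_dom Q R (a |: S) (b |: S); entailed Q (a |: S) (b |: S);
       UT R Q (a |: S) (b |: S); match_dom Q (a |: S) (b |: S)].
Proof.
move=> nab aS bS.
have hX : 0 < #|a |: S| by rewrite cardsU1 aS.
have hY : 0 < #|b |: S| by rewrite cardsU1 bS.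
apply: (@assemble R C Q HQ _ _ (Q a b)) => //.
- by apply/set0Pn; exists a; rewrite setU11.
- by apply/set0Pn; exists b; rewrite setU11.
- move=> W; case: (boolP (Q a b)) => // nQ.
  have Qba := Qnot HQ nab nQ.
  have := W _ (rk_leS b).
  rewrite !cardIU1 // !cardsU1 aS bS !(topj_le HQ) /weakpref eqxx orbT (negbTE nQ) (negbTE nab) /=.
  nia.
- move=> P; split.
    move=> j hj; rewrite prob_le // !cardIU1 // !cardsU1 aS bS /=.
    case: (boolP (b \in topj Q j)) => bT /=.
      by rewrite (topj_up HQ P bT) /=; nia.
    nia.
  exists (rk Q b); first exact: rk_le.
  rewrite prob_lt // !cardIU1 // !cardsU1 aS bS !(topj_lt HQ) (Qirr HQ) P /=.
  nia.
- move=> P; apply: one_step; apply: ax_R => //.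
  apply/subsetP => z zS; rewrite !inE.
  apply/negP => /orP [/eqP e|/eqP e]; [by move: aS; rewrite -e zS | by move: bS; rewrite -e zS].
- rewrite /match_dom !cardsU1 aS bS leqnn.
  by apply: iff_sym; apply: (L_f HQ nab aS bS).
Qed.

End Cases2.


Unset Implicit Arguments.

Theorem lemma1 (R : realType) (C : finType) (Q : rel C)
  (HQ : strict_linear_order Q) (n : nat) (pa pa' : 'I_n -> C)
  (Hdiff : differ_in_one_voter pa pa') :
  let X := plurality pa in
  let Y := plurality pa' in
  [<-> stoch_dom Q R X Y;
       entailed Q X Y;
       (forall u : C -> R, consistent Q u -> (set_util u Y < set_util u X)%R);
       match_dom Q X Y].
Proof.
have [n1 n2 sh] := classify Hdiff.
move: n1 n2 sh; move: (plurality pa) (plurality pa') => X Y n1 n2 sh /=.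
case: sh => [e|a eX aY nY|b bX eY|b eY bX nX|a aY eX|a b S nab aS bS eX eY].
- by subst Y; apply: (assemble_eq R HQ).
- by subst X; apply: (case_b R HQ).
- by subst Y; apply: (case_c R HQ).
- by subst Y; apply: (case_d R HQ).
- by subst X; apply: (case_e R HQ).
- by subst X Y; apply: (case_f R HQ).
Qed.
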